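(* For every $0<\epsilon<1$ there is an infinite family of graphs $G_n$ on $n$ vertices ($n\to\infty$) with edge density at most $1+\Theta(n^{-\epsilon})$ such that Broadcast on $G_n$ is not solvable with fewer than $\Theta(n^{1-\epsilon})$ ignorant agents.
   Context: Edge density of a graph with $m$ edges and $n$ nodes is $m/n$. Broadcast model: a connected base graph $G=(V,E)$ with $n$ nodes. There is one source agent holding a message $\mathcal M$ and $k\ge1$ ignorant agents (agents not holding $\mathcal M$); initially all agents occupy pairwise distinct nodes, the initial placement being chosen by the adversary. Time proceeds in synchronous rounds; in each round: (1) the adversary removes a (possibly empty) set $E'\subseteq E$ of edges such that $(V,E\setminus E')$ is connected; (2) each agent (agents have unique IDs, local memory, and see the entire current graph, the positions of all agents and which agents hold $\mathcal M$) chooses either to stay or to traverse an edge of $E\setminus E'$ incident to its current node; (3) agents move. Whenever an ignorant agent is at the same node as an agent holding $\mathcal M$, it receives $\mathcal M$ and becomes a source agent. The adversary is adaptive and knows the agents' strategy. Broadcast is solvable on $G$ with $k$ ignorant agents if the agents have a strategy such that, for every initial placement and every adversary behaviour, after finitely many rounds all agents hold $\mathcal M$; otherwise the adversary is said to have a winning strategy. *)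

(* Defs.v *)
From mathcomp Require Import all_boot.
From Stdlib Require Import Reals.

Set Implicit Arguments.
Unset Strict Implicit.
Unset Printing Implicit Defensive.

Definition graph (n : nat) := {set {set 'I_n}}.

Definition simple_graph n (G : graph n) : Prop := forall e, e \in G -> #|e| = 2.

Definition adj n (G : graph n) : rel 'I_n := fun u v => [set u; v] \in G.

Definition connected_graph n (G : graph n) : Prop :=
  forall u v : 'I_n, connect (adj G) u v.

Definition admissible_removal n (G : graph n) (R : graph n) : Prop :=
  R \subset G /\ connected_graph (G :\: R).

(* Agents are 'I_k.+1 : agent ord0 is the source, the other k agents are ignorant.
   A configuration: positions of agents, and the set of agents holding M. *)
Definition config n k := ({ffun 'I_k.+1 -> 'I_n} * {set 'I_k.+1})%type.

Definition history n k := seq (config n k * graph n).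

Definition adversary n k := history n k -> config n k -> graph n.

(* Joint agent strategy (agents have IDs, memory and full information):
   given history, current configuration and current removed edges, each agent
   chooses None (stay) or Some v (traverse the edge to v). *)
Definition strategy n k :=
  history n k -> config n k -> graph n -> {ffun 'I_k.+1 -> option 'I_n}.

(* A move is legal iff the edge to the target is present in E \ E';
   an illegal request is treated as staying. *)
Definition new_pos n k (G R : graph n) (c : config n k)
  (mv : {ffun 'I_k.+1 -> option 'I_n}) : {ffun 'I_k.+1 -> 'I_n} :=
  [ffun i => match mv i with
             | Some v => if [set c.1 i; v] \in G :\: R then v else c.1 i
             | None => c.1 i
             end].

Definition step n k (G R : graph n) (c : config n k)
  (mv : {ffun 'I_k.+1 -> option 'I_n}) : config n k :=
  let p := new_pos G R c mv in
  (p, [set i | [exists j in c.2, p j == p i]]).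

Fixpoint run n k (G : graph n) (s : strategy n k) (a : adversary n k)
  (c0 : config n k) (t : nat) : config n k * history n k :=
  match t with
  | 0 => (c0, [::])
  | t'.+1 =>
      let ch := run G s a c0 t' in
      let c := ch.1 in let h := ch.2 in
      let R := a h c in
      (step G R c (s h c R), rcons h (c, R))
  end.

Definition broadcast_solvable n (G : graph n) (k : nat) : Prop :=
  exists s : strategy n k,
    forall p0 : {ffun 'I_k.+1 -> 'I_n}, injective p0 ->
    forall a : adversary n k,
      (forall h c, admissible_removal G (a h c)) ->
      exists t, (run G s a (p0, [set ord0]) t).1.2 = [set: 'I_k.+1].

(* Main.v *)
From Stdlib Require Import Lia.
From Stdlib Require ZArith.
Require Import Defs.
From mathcomp Require Import all_boot zify.
From Stdlib Require Import Reals Lra.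

Set Implicit Arguments.
Unset Strict Implicit.
Unset Printing Implicit Defensive.
Definition Lst (n' K : nat) : seq {set 'I_n'.+1} :=
  [set inord 0; inord 1] ::
  [seq [set inord 0; inord j] | j <- iota 2 K.+1] ++
  [seq [set inord 1; inord j] | j <- iota 2 K.+1] ++
  [seq [set inord 2; inord j] | j <- iota 3 (n'.+1 - 3)].

Definition Gr (n' K : nat) : graph n'.+1 := [set e | e \in Lst n' K].

Lemma card_Gr n' K : 2 <= n' -> #|Gr n' K| <= n'.+1 + 2 * K.
Proof.
move=> h; rewrite cardsE; apply: leq_trans (card_size _) _.
rewrite /Lst -cat1s !size_cat !size_map !size_iota; rewrite [size [:: _]]/=; lia.
Qed.

Lemma adj_sym n (H : graph n) : symmetric (adj H).
Proof. by move=> u v; rewrite /adj setUC. Qed.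

Lemma conn_H n' (H : graph n'.+1) :
  2 <= n' ->
  (forall j, 3 <= j <= n' -> [set inord 2; inord j] \in H) ->
  [set inord 0; inord 1] \in H ->
  (exists t y0, [/\ t <= 1, 2 <= y0 <= n' & [set inord t; inord y0] \in H]) ->
  connected_graph H.
Proof.
move=> h2 Hst H01 [t [y0 [ht hy0 Hty]]].
have hs := sym_connect_sym (adj_sym H).
have to2 : forall u : 'I_n'.+1, 2 <= u -> connect (adj H) u (inord 2).
  move=> u hu; case: (ltngtP u 2) => [hlt|hgt|heq].
  - by move: hlt; rewrite ltnNge hu.
  - apply: connect1; rewrite /adj setUC -[u]inord_val; apply: Hst.
    by rewrite hgt -ltnS ltn_ord.
  - have -> : u = inord 2 by apply: val_inj; rewrite /= inordK // heq.
    exact: connect0.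
have t2 : connect (adj H) (inord t) (inord 2).
  apply: connect_trans (to2 (inord y0) _).
    by apply: connect1.
  by rewrite inordK; case/andP: hy0 => // a b; rewrite ltnS.
clear Hty.
have c01 : connect (adj H) (inord 0) (inord 1) by apply: connect1.
have all2 : forall u : 'I_n'.+1, connect (adj H) u (inord 2).
  move=> u; case: (leqP 2 u) => hu; first exact: to2.
  have [e0|e1] : u = inord 0 \/ u = inord 1.
    case: u hu => [[|[|m]] p] /= hu.
    - by left; apply: val_inj; rewrite /= inordK.
    - by right; apply: val_inj; rewrite /= inordK.
    - by [].
  - case: t ht t2 => [|[|m]] // _ t2; first by rewrite e0.
    by rewrite e0; apply: connect_trans t2.
  - case: t ht t2 => [|[|m]] // _ t2; last by rewrite e1.
    by rewrite e1; apply: connect_trans _ t2; rewrite hs.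
move=> u v; apply: connect_trans (all2 u) _; by rewrite hs.
Qed.

Lemma Gr_st n' K j : 3 <= j <= n' -> [set inord 2; inord j] \in Gr n' K.
Proof.
move=> /andP[a b]; rewrite inE /Lst in_cons; apply/orP; right.
rewrite !mem_cat; apply/orP; right; apply/orP; right.
apply/mapP; exists j => //; rewrite mem_iota; lia.
Qed.

Lemma Gr_01 n' K : [set inord 0; inord 1] \in Gr n' K.
Proof. by rewrite inE /Lst inE eqxx. Qed.

Lemma Gr_hub n' K h j : h <= 1 -> 2 <= j <= K.+2 ->
  [set inord h; inord j] \in Gr n' K.
Proof.
move=> hh /andP[a b]; rewrite inE /Lst in_cons; apply/orP; right.
rewrite !mem_cat; case: h hh => [|[|m]] // _.
  apply/orP; left; apply/mapP; exists j => //; rewrite mem_iota; lia.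
apply/orP; right; apply/orP; left; apply/mapP; exists j => //; rewrite mem_iota; lia.
Qed.

Lemma cards2_inord n' a b : a < n'.+1 -> b < n'.+1 -> a != b ->
  #|[set (inord a : 'I_n'.+1); inord b]| = 2.
Proof.
move=> ha hb hab; rewrite cards2; case: eqP => // /(congr1 (@nat_of_ord _)).
by rewrite /= !inordK // => /eqP; rewrite (negbTE hab).
Qed.

Lemma Gr_simple n' K : K.+2 <= n' -> simple_graph (Gr n' K).
Proof.
move=> hK e; rewrite inE /Lst inE => /orP[/eqP->|].
  by apply: cards2_inord; lia.
rewrite !mem_cat => /orP[|/orP[]] /mapP[j]; rewrite mem_iota => hj ->;
  apply: cards2_inord; lia.
Qed.

Lemma Gr_conn n' K : K.+2 <= n' -> connected_graph (Gr n' K).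
Proof.
move=> hK; apply: conn_H; first lia.
- by move=> j hj; apply: Gr_st.
- exact: Gr_01.
- by exists 0, 2; split => //; [lia | apply: Gr_hub].
Qed.

Definition occ n k (c : config n k) (y : 'I_n) := [exists i, c.1 i == y].

Definition R0 n k (G : graph n) (c : config n k) : graph n :=
  [set e in G | [exists x : 'I_n, exists y : 'I_n,
     [&& e == [set x; y], (x <= 1), (2 <= y) & (x == c.1 ord0) || occ c y]]].

Definition advr n (k : nat) (G : graph n) : adversary n k := fun h c =>
  if [forall u, forall v, connect (adj (G :\: R0 G c)) u v] then R0 G c else set0.

Lemma advr_adm n k (G : graph n) (h : history n k) c : connected_graph G ->
  admissible_removal G (advr G h c).
Proof.
rewrite /advr => HG; case: ifP => [/forallP Hc|_].
  split; first by apply/subsetP => e; rewrite inE => /andP[].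
  by move=> u v; have /forallP := Hc u; apply.
by split; [apply: sub0set | rewrite setD0].
Qed.

Lemma src_move n k (G : graph n) (c : config n k) v :
  c.1 ord0 <= 1 -> [set c.1 ord0; v] \in G :\: R0 G c -> v <= 1.
Proof.
move=> hs; rewrite !inE => /andP[hn hG]; rewrite leqNgt; apply/negP => hv.
move: hn; rewrite hG /=; apply/negP; rewrite negbK.
apply/existsP; exists (c.1 ord0); apply/existsP; exists v.
by rewrite eqxx hs hv eqxx.
Qed.

Lemma ign_move n k (G : graph n) (c : config n k) i v :
  2 <= c.1 i -> [set c.1 i; v] \in G :\: R0 G c -> 2 <= v.
Proof.
move=> hi; rewrite !inE => /andP[hn hG]; rewrite leqNgt; apply/negP => hv.
move: hn; rewrite hG /=; apply/negP; rewrite negbK.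
apply/existsP; exists v; apply/existsP; exists (c.1 i).
rewrite setUC eqxx hi -ltnS hv /= orbC; apply/orP; left.
by apply/existsP; exists i.
Qed.

Definition Inv n k (c : config n k) :=
  [/\ c.1 ord0 <= 1, forall i, i != ord0 -> 2 <= c.1 i & c.2 = [set ord0]].

Lemma step_inv n k (G : graph n) (c : config n k) mv :
  Inv c -> Inv (step G (R0 G c) c mv).
Proof.
case=> h0 hi h2.
have p0 : new_pos G (R0 G c) c mv ord0 <= 1.
  rewrite /new_pos ffunE; case: (mv ord0) => // v.
  by case: ifP => // he; apply: src_move he.
have pi : forall i, i != ord0 -> 2 <= new_pos G (R0 G c) c mv i.
  move=> i hi0; rewrite /new_pos ffunE; case: (mv i) => [v|]; last exact: hi.
  by case: ifP => [he|_]; [apply: ign_move he; apply: hi | apply: hi].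
split => //=; apply/setP => i; rewrite !inE h2.
apply/existsP/eqP => [[j]|->]; last by exists ord0; rewrite inE !eqxx.
rewrite inE => /andP[/eqP-> /eqP he]; apply/eqP; apply: contraTT p0 => hne.
by rewrite -ltnNge he; apply: pi.
Qed.

Lemma notR0 n k (G : graph n) (c : config n k) e : e \in G ->
  (forall x y : 'I_n, e = [set x; y] -> x <= 1 -> 2 <= y ->
      (x == c.1 ord0) || occ c y -> False) -> e \in G :\: R0 G c.
Proof.
move=> hG hF; rewrite !inE hG andbT; apply/negP => /existsP[x /existsP[y]].
by case/and4P => /eqP he hx hy ho; apply: (hF x y).
Qed.

Lemma pigeon n' K k (c : config n'.+1 k) : K.+2 <= n' -> k <= K -> Inv c ->
  exists y0 : 'I_n'.+1, 2 <= y0 <= K.+2 /\ ~~ occ c y0.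
Proof.
move=> hK hk [h0 hi h2].
case: (boolP [exists y0 : 'I_n'.+1, (2 <= y0 <= K.+2) && ~~ occ c y0]).
  by move=> /existsP[y /andP[a b]]; exists y.
move=> hne; exfalso.
pose f (j : 'I_K.+1) : 'I_n'.+1 := inord (j + 2).
have fv : forall j : 'I_K.+1, nat_of_ord (f j) = j + 2.
  move=> j; rewrite /f inordK //; have := ltn_ord j; lia.
have finj : injective f.
  by move=> i j /(congr1 (@nat_of_ord _)); rewrite !fv => /eqP; rewrite eqn_add2r => /eqP /val_inj.
have sub : f @: setT \subset c.1 @: [set~ ord0].
  apply/subsetP => y /imsetP[j _ ->].
  have : (2 <= f j <= K.+2) ==> occ c (f j).
    by move: hne; rewrite negb_exists => /forallP /(_ (f j)); rewrite negb_and negbK implybE.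
  rewrite fv; have := ltn_ord j => hj.
  have -> : (2 <= j + 2 <= K.+2) = true by apply/andP; split; lia.
  move=> /= /existsP[i /eqP hi']; apply/imsetP; exists i => //.
  rewrite !inE; apply/eqP => hi0; move: h0; rewrite -hi0 hi' fv; lia.
have := subset_leq_card sub; rewrite card_imset // cardsT card_ord => h1.
have := leq_trans h1 (leq_imset_card _ _); rewrite cardsC1 card_ord /=; lia.
Qed.

Lemma Gr_R0_conn n' K k (c : config n'.+1 k) : K.+2 <= n' -> k <= K -> Inv c ->
  connected_graph (Gr n' K :\: R0 (Gr n' K) c).
Proof.
move=> hK hk hI; have [h0 hi h2] := hI.
have [y0 [hy0 ho]] := pigeon hK hk hI.
apply: conn_H; first lia.
- move=> j hj; apply: notR0; first exact: Gr_st.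
  move=> x y he hx _ _; have : x \in [set inord 2; inord j] by rewrite he set21.
  by rewrite !inE => /orP[] /eqP hx'; move: hx; rewrite hx' inordK; lia.
- apply: notR0; first exact: Gr_01.
  move=> x y he _ hy _; have : y \in [set (inord 0 : 'I_n'.+1); inord 1] by rewrite he set22.
  by rewrite !inE => /orP[] /eqP hy'; move: hy; rewrite hy' inordK; lia.
- exists (if c.1 ord0 == 0 :> nat then 1 else 0), y0; split.
  + by case: ifP.
  + by move: hy0; have := ltn_ord y0; lia.
  + apply: notR0; first by apply: Gr_hub => //; case: ifP.
    move=> x y he hx hy; have : x \in [set inord (if c.1 ord0 == 0 :> nat then 1 else 0); inord y0]
      by rewrite he set21.
    rewrite inord_val !inE => /orP[] /eqP hx'; last by move: hx hy0; rewrite hx'; lia.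
    have : y \in [set inord (if c.1 ord0 == 0 :> nat then 1 else 0); y0]
      by rewrite -[in X in _ \in X](inord_val y0) he set22.
    rewrite !inE => /orP[] /eqP hy'.
      by move: hy; rewrite hy' inordK; case: ifP => //; lia.
    rewrite hy' (negbTE ho) orbF hx' => /eqP /(congr1 (@nat_of_ord _)).
    rewrite inordK; last by case: ifP => _; lia.
    by move: h0; case: eqP => /=; lia.
Qed.

Lemma not_solv n' K k : 1 <= k -> k <= K -> K.+2 <= n' ->
  ~ broadcast_solvable (Gr n' K) k.
Proof.
move=> hk1 hk hK [s Hs].
pose p0 : {ffun 'I_k.+1 -> 'I_n'.+1} :=
  [ffun i => inord (if i == ord0 then 0 else i.+1)].
have hv : forall i : 'I_k.+1, nat_of_ord (p0 i) = if i == ord0 then 0 else i.+1.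
  move=> i; rewrite ffunE inordK //; case: ifP => //; have := ltn_ord i; lia.
have pinj : injective p0.
  move=> i j /(congr1 (@nat_of_ord _)); rewrite !hv.
  case: (i =P ord0) => [->|/eqP hi]; case: (j =P ord0) => [->|/eqP hj] // h;
    apply: val_inj => /=; lia.
have [t Ht] := Hs p0 pinj (advr (Gr n' K)) (fun h c => advr_adm h c (Gr_conn hK)).
have inv : forall t, Inv (run (Gr n' K) s (advr (Gr n' K)) (p0, [set ord0]) t).1.
  elim => [|t' IH].
    split; [by rewrite /= hv eqxx | by move=> i hi; rewrite /= hv (negbTE hi); case: i hi => [[|m] p] | by []].
  rewrite /=; set c := (run _ _ _ _ t').1; set h := (run _ _ _ _ t').2.
  have -> : advr (Gr n' K) h c = R0 (Gr n' K) c.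
    rewrite /advr ifT //; apply/forallP => u; apply/forallP => v.
    exact: Gr_R0_conn.
  exact: step_inv.
have [_ _ e] := inv t; move: Ht; rewrite e => /setP /(_ (inord 1)).
by rewrite !inE => /eqP /(congr1 (@nat_of_ord _)); rewrite /= inordK.
Qed.
Lemma nat_between (x : R) : (0 <= x)%R -> exists K : nat, (x < INR K <= x + 1)%R.
Proof.
move=> hx; have [h1 h2] := archimed x.
have hz : (0 < up x)%Z by apply: lt_0_IZR; lra.
exists (Z.to_nat (up x)); rewrite INR_IZR_INZ ZArith.Znat.Z2Nat.id; [lra | lia].
Qed.

Lemma Rpower_pos a b : (0 < Rpower a b)%R.
Proof. rewrite /Rpower; exact: exp_pos. Qed.

Theorem corollary1 (eps : R) :
  (0 < eps < 1)%R ->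
  exists c1 c2 : R, (0 < c1)%R /\ (0 < c2)%R /\
    forall N : nat, exists n : nat, (N <= n)%N /\
      exists G : graph n,
        simple_graph G /\ connected_graph G /\
        (INR #|G| / INR n <= 1 + c1 * Rpower (INR n) (- eps))%R /\
        forall k : nat, (1 <= k)%N ->
          (INR k < c2 * Rpower (INR n) (1 - eps))%R ->
          ~ broadcast_solvable G k.
Proof.
move=> [he0 he1]; exists 4%R, 1%R; split; first lra; split; first lra.
move=> N.
have [m0 [hm0 _]] := (@nat_between _ (Rlt_le _ _ (Rpower_pos 2 (/ eps)))).
pose n' := maxn N (maxn m0 16).
have hN : (N <= n')%N by rewrite /n'; lia.
have hm : (m0 <= n')%N by rewrite /n'; lia.
have h8 : (16 <= n')%N by rewrite /n'; lia.
have nR : INR n'.+1 = (INR n' + 1)%R by rewrite S_INR.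
have n8 : (16 <= INR n')%R.
  by have := le_INR 16 n' (elimT leP h8); replace (INR 16) with 16%R by (simpl; lra).

have m0R : (INR m0 <= INR n'.+1)%R by apply: le_INR; apply/leP; lia.
have hpe : (2 <= Rpower (INR n'.+1) eps)%R.
  have -> : 2%R = Rpower (Rpower 2 (/ eps)) eps.
    by rewrite Rpower_mult Rinv_l ?Rpower_1; lra.
  apply: Rle_Rpower_l; first lra; split; [exact: Rpower_pos | lra].
set x := Rpower (INR n'.+1) (1 - eps).
have hx : (x * Rpower (INR n'.+1) eps = INR n'.+1)%R.
  rewrite /x -Rpower_plus; replace (1 - eps + eps)%R with 1%R by ring.
  apply: Rpower_1; lra.
have xpos : (0 < x)%R by apply: Rpower_pos.
have hx2 : (2 * x <= INR n'.+1)%R by nra.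
have [K [hK1 hK2]] := (@nat_between _ (Rlt_le _ _ xpos)).
have hK : (K.+2 <= n')%N.
  have : (INR (K + 3) <= INR n')%R by rewrite plus_INR; simpl (INR 3); lra.
  by move/INR_le/leP; lia.
exists n'.+1; split; first lia.
exists (Gr n' K); split; first exact: Gr_simple.
split; first exact: Gr_conn.
split.
  set y := Rpower (INR n'.+1) (- eps).
  have hxy : x = (INR n'.+1 * y)%R.
    rewrite /x /y -{2}(Rpower_1 (INR n'.+1)); last lra.
    by rewrite -Rpower_plus; f_equal; ring.
  have hny : (1 <= INR n'.+1 * y)%R.
    have : (Rpower (INR n'.+1) (-1) <= y)%R by apply: Rle_Rpower; lra.
    rewrite Rpower_Ropp Rpower_1; last lra.
    move=> h; have := Rmult_le_compat_l (INR n'.+1) _ _ (ltac:(lra)) h.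
    by rewrite Rinv_r; lra.
  have hG : (INR #|Gr n' K| <= INR n'.+1 + 2 * INR K)%R.
    have := le_INR _ _ (elimT leP (card_Gr K (ltac:(lia) : (2 <= n')%N))).
    by rewrite plus_INR mult_INR.
  apply: (Rmult_le_reg_r (INR n'.+1)); first lra.
  have -> : (INR #|Gr n' K| / INR n'.+1 * INR n'.+1 = INR #|Gr n' K|)%R.
    by field; lra.
  nra.
move=> k hk1 hkx; apply: not_solv hk1 _ hK.
have : (INR k < INR K)%R by move: hkx; rewrite -/x; lra.
by move/INR_lt/ltP; lia.
Qed.
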